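(* Let $X$ be an upper-bound unital commutative semiring. The following are equivalent: (1) $\mathcal{S}(X)$ is fully elementary; (2) $\mathcal{S}(X)$ is Frobenius; (3) $X=\{0\}$.
   Context: A semiring $(X,+,0,\cdot)$: $(X,+,0)$ commutative monoid, $(X,\cdot)$ semigroup, distributivity, $0$ absorbing. Intrinsic order: $a\le b$ iff $a+x=b$ for some $x$; upper-bound means this preorder is antisymmetric. $\mathcal{S}(X)=X\times X$ with $(a',a'')+(b',b'')=(a'+b',a''+b'')$, $(a',a'')\cdot(b',b'')=(a'b'+a''b'',a'b''+a''b')$; it is a unital commutative semiring with zero $(0,0)$ and unit $(1,0)$. A unital commutative semiring $Y$ is Frobenius if $(x+y)^n=x^n+y^n$ for all $x,y\in Y$, $n\ge1$. Polynomials over $Y$ in $n$ variables are functions $Y^n\to Y$ represented by formal expressions $\sum_k a_k\prod_j x_j^{d_{k,j}}$; symmetric if represented by an expression closed (with coefficients) under permuting variables. $e_j$ is the sum of all products of $j$ distinct variables. $Y$ is fully elementary if for every $n$ every symmetric polynomial in $n$ variables equals $r(e_1,\dots,e_n)$ as functions on $Y^n$ for some polynomial $r$. *)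

(* Defs.v *)
From HB Require Import structures.
From mathcomp Require Import all_boot all_order all_algebra all_fingroup.
Set Implicit Arguments. Unset Strict Implicit. Unset Printing Implicit Defensive.
Import GRing.Theory.
Local Open Scope ring_scope.

(* Semirings are MathComp [comPzSemiRingType]s (commutative, unital, 0 absorbing,
   possibly trivial 0 = 1). *)

Definition intrinsic_le (X : comPzSemiRingType) (a b : X) : Prop :=
  exists x : X, a + x = b.

Definition upper_bound (X : comPzSemiRingType) : Prop :=
  forall a b : X, intrinsic_le a b -> intrinsic_le b a -> a = b.

Definition SX (X : comPzSemiRingType) : Type := (X * X)%type.

Section SXdef.
Variable X : comPzSemiRingType.

HB.instance Definition _ := GRing.Nmodule.copy (SX X) (X * X)%type.

Definition SX_one : SX X := (1, 0).
Definition SX_mul (a b : SX X) : SX X :=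
  (a.1 * b.1 + a.2 * b.2, a.1 * b.2 + a.2 * b.1).

Lemma SX_addE (a b : SX X) : a + b = (a.1 + b.1, a.2 + b.2).
Proof. by case: a; case: b. Qed.

Lemma SX_zeroE : (0 : SX X) = (0, 0).
Proof. by []. Qed.

Lemma SX_mulA : associative SX_mul.
Proof.
move=> [a1 a2] [b1 b2] [c1 c2]; rewrite /SX_mul /=. congr pair;
  symmetry; rewrite !mulrDl !mulrDr !mulrA addrACA; congr (_ + _); exact: addrC.
Qed.

Lemma SX_mulC : commutative SX_mul.
Proof.
move=> [a1 a2] [b1 b2]; rewrite /SX_mul /=; congr pair;
  by rewrite ?[a1 * _]mulrC ?[a2 * _]mulrC // addrC.
Qed.

Lemma SX_mul1r : left_id SX_one SX_mul.
Proof. by move=> [a1 a2]; rewrite /SX_mul /= !mul1r !mul0r ?addr0 ?add0r. Qed.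

Lemma SX_mulDl : left_distributive SX_mul +%R.
Proof.
move=> [a1 a2] [b1 b2] [c1 c2]; rewrite /SX_mul !SX_addE /=; congr pair;
  rewrite !mulrDl -!addrA; congr (_ + _); rewrite addrC -!addrA; congr (_ + _);
  by rewrite addrC.
Qed.

Lemma SX_mul0r : left_zero (0 : SX X) SX_mul.
Proof. by move=> [a1 a2]; rewrite /SX_mul /= !mul0r addr0. Qed.

HB.instance Definition _ := GRing.Nmodule_isComPzSemiRing.Build (SX X)
  SX_mulA SX_mulC SX_mul1r SX_mulDl SX_mul0r.

End SXdef.

Definition Frobenius (Y : comPzSemiRingType) : Prop :=
  forall (x y : Y) (n : nat), (1 <= n)%N -> (x + y) ^+ n = x ^+ n + y ^+ n.

(* Formal polynomials in n variables over Y: a formal expression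
   sum_d c(d) prod_j x_j^(d j), where the exponent vectors d range over
   {ffun 'I_n -> 'I_D} for some degree bound D, with coefficients c d.  *)
Definition poly_eval (Y : comPzSemiRingType) (n D : nat)
  (c : {ffun 'I_n -> 'I_D} -> Y) (x : 'I_n -> Y) : Y :=
  \sum_(d : {ffun 'I_n -> 'I_D}) c d * \prod_(j < n) x j ^+ d j.

Definition sym_coefs (Y : comPzSemiRingType) (n D : nat)
  (c : {ffun 'I_n -> 'I_D} -> Y) : Prop :=
  forall (s : 'S_n) (d : {ffun 'I_n -> 'I_D}), c [ffun j => d (s j)] = c d.

Definition elem_sym (Y : comPzSemiRingType) (n k : nat) (x : 'I_n -> Y) : Y :=
  \sum_(S : {set 'I_n} | #|S| == k) \prod_(i in S) x i.

(* Fully elementary: every symmetric polynomial p in n variables coincides,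
   as a function on Y^n, with r(e_1, ..., e_n) for some polynomial r. *)
Definition fully_elementary (Y : comPzSemiRingType) : Prop :=
  forall (n D : nat) (c : {ffun 'I_n -> 'I_D} -> Y), sym_coefs c ->
    exists (D' : nat) (c' : {ffun 'I_n -> 'I_D'} -> Y),
      forall x : 'I_n -> Y,
        poly_eval c x = poly_eval c' (fun i : 'I_n => elem_sym i.+1 x).

(* Main.v *)
Require Import Defs.
From HB Require Import structures.
From mathcomp Require Import all_boot all_order all_algebra all_fingroup.
Local Open Scope ring_scope.
Import GRing.Theory.

Section S.
Variable X : comPzSemiRingType.
Hypothesis hX : upper_bound X.

Lemma mulE (a b : SX X) : a * b = (a.1*b.1 + a.2*b.2, a.1*b.2 + a.2*b.1).
Proof. by []. Qed.
Lemma oneE : (1 : SX X) = (1, 0).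
Proof. by []. Qed.
Lemma addE (a b : SX X) : a + b = (a.1 + b.1, a.2 + b.2).
Proof. by case: a; case: b. Qed.

Lemma zsf (a b : X) : a + b = 0 -> a = 0.
Proof. move=> h; apply: hX; [by exists b | by exists a; rewrite add0r]. Qed.

Lemma sum0 (I : finType) (f : I -> X) : \sum_i f i = 0 -> forall i, f i = 0.
Proof. move=> h i; move: h; rewrite (bigD1 i) //=; exact: zsf. Qed.

Lemma snd_sum (I : finType) (F : I -> SX X) : (\sum_i F i).2 = \sum_i (F i).2.
Proof. by apply: (big_morph snd) => // a b; rewrite addE. Qed.

Lemma triv_one : (1 + 1 : X) = 0 -> forall x : X, x = 0.
Proof.
move=> h x. have h1 : (1 : X) = 0 by apply: zsf h.
by rewrite -(mulr1 x) h1 mulr0.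
Qed.

Lemma es1 n (x : 'I_n -> SX X) : elem_sym 1 x = \sum_i x i.
Proof.
rewrite /elem_sym.
rewrite (eq_bigl (fun S => S \in [set [set i] | i : 'I_n])); last first.
  move=> S /=; apply/cards1P/imsetP => [[i ->]|[i _ ->]]; by exists i.
rewrite big_imset /=; last by move=> i j _ _; apply: set1_inj.
by apply: eq_bigr => i _; rewrite big_set1.
Qed.

Lemma es2 (x : 'I_2 -> SX X) : elem_sym 2 x = x ord0 * x (lift ord0 ord0).
Proof.
rewrite /elem_sym (eq_bigl (pred1 setT)); last first.
  move=> S /=; apply/eqP/eqP => [h|->]; last by rewrite cardsT card_ord.
  by apply/eqP; rewrite eqEcard subsetT cardsT card_ord h.
rewrite big_pred1_eq.
by rewrite (eq_bigl predT) ?big_ord_recl ?big_ord0 ?mulr1 // => i; rewrite inE.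
Qed.


Definition gE (k : 'I_3) : SX X := if odd k then 0 else 1.
Definition cE (d : {ffun 'I_2 -> 'I_3}) : SX X := \prod_j gE (d j).

Lemma cE_sym : sym_coefs cE.
Proof.
move=> s d; rewrite /cE [RHS](reindex_inj (@perm_inj _ s)) /=.
by apply: eq_bigr => j _; rewrite ffunE.
Qed.

Lemma cE_eval (x : 'I_2 -> SX X) :
  poly_eval cE x = (1 + x ord0 ^+ 2) * (1 + x (lift ord0 ord0) ^+ 2).
Proof.
rewrite /poly_eval /cE.
rewrite (eq_bigr (fun d : {ffun 'I_2 -> 'I_3} => \prod_j (gE (d j) * x j ^+ d j))); last by move=> d _; rewrite big_split.
rewrite -(bigA_distr_bigA (fun (j : 'I_2) (k : 'I_3) => gE k * x j ^+ k)).
rewrite big_ord_recl big_ord_recl big_ord0 /= mulr1.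
rewrite !big_ord_recl !big_ord0 /gE /=.
by rewrite !expr0 !mul1r !mul0r !add0r !addr0.
Qed.

Lemma FE_triv : fully_elementary (SX X) -> forall x : X, x = 0.
Proof.
move=> FE.
have [D' [c' Hr]] := FE 2%N 3%N cE cE_sym.
pose u : SX X := (1, 1). pose t : SX X := (0, 1).
have Hev : forall x : 'I_2 -> SX X, poly_eval cE x =
   \sum_d c' d * ((x ord0 + x (lift ord0 ord0)) ^+ d ord0 *
                  (x ord0 * x (lift ord0 ord0)) ^+ d (lift ord0 ord0)).
  move=> x; rewrite Hr /poly_eval; apply: eq_bigr => d _.
  by rewrite big_ord_recl big_ord_recl big_ord0 mulr1 /= es1 es2 big_ord_recl big_ord_recl big_ord0 addr0.
pose xA (i : 'I_2) : SX X := if val i == 0%N then 1 else t.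
pose xB (i : 'I_2) : SX X := if val i == 0%N then u else 0.
pose xO (i : 'I_2) : SX X := 0.
have HA := Hev xA; have HB := Hev xB; have HO := Hev xO.
rewrite /xA /xB /xO /= in HA HB HO.
rewrite !cE_eval /= in HA HB HO.
have tu : 1 + t = u by rewrite addE /= add0r addr0.
rewrite tu mul1r in HA.
rewrite addr0 mulr0 in HB.
rewrite addr0 mulr0 in HO.
have symu : forall (k : nat) (c w : SX X), (0 < k)%N -> (c * (u ^+ k * w)).1 = (c * (u ^+ k * w)).2.
  move=> [//|k] c w _.
  rewrite exprS -mulrA mulrCA mulE /= !mul1r addrC //.
have Hterm : forall d : {ffun 'I_2 -> 'I_D'}, d (lift ord0 ord0) = 0%N :> nat -> (0 < d ord0)%N ->
    c' d * (u ^+ d ord0 * t ^+ d (lift ord0 ord0)) = 0.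
  move=> d h1 h0.
  have h2 : (c' d * (u ^+ d ord0 * t ^+ d (lift ord0 ord0))).2 = 0.
    have HA2 : \sum_d (c' d * (u ^+ d ord0 * t ^+ d (lift ord0 ord0))).2 = 0.
      rewrite -snd_sum -HA !mulE /=.
      by rewrite !(mul0r, mulr0, add0r, addr0).
    exact: (@sum0 _ (fun d => (c' d * (u ^+ d ord0 * t ^+ d (lift ord0 ord0))).2) HA2 d).
  move: (symu (d ord0) (c' d) (t ^+ d (lift ord0 ord0)) h0) h2.
  by case: (c' d * _) => a b /= -> ->.
have HBO : (1 + u ^+ 2) * (1 + 0 ^+ 2) = (1 + 0 ^+ 2) * (1 + 0 ^+ 2) :> SX X.
  rewrite HB HO; apply: eq_bigr => d _.
  case E1 : (nat_of_ord (d (lift ord0 ord0))) => [|k1]; last by rewrite !expr0n /= !mulr0.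
  case E0 : (nat_of_ord (d ord0)) => [|k0]; first by [].
  have := Hterm d E1; rewrite E0 E1 => -> //.
  by rewrite expr0n /= mul0r mulr0.
have := congr1 snd HBO; rewrite !mulE /= !(mul0r, mulr0, add0r, addr0, mul1r, mulr1).
by move/triv_one.
Qed.



Lemma Frob_triv : Frobenius (SX X) -> forall x : X, x = 0.
Proof.
move=> F; have := F 1 ((0, 1) : SX X) 2%N isT.
move/(congr1 snd); rewrite !expr2 !mulE /= !(mul0r, mulr0, add0r, addr0, mul1r, mulr1).
by move/triv_one.
Qed.

Lemma triv_all : (forall x : X, x = 0) -> forall a b : SX X, a = b.
Proof. by move=> h [a1 a2] [b1 b2]; rewrite (h a1) (h a2) (h b1) (h b2). Qed.

End S.

Theorem proposition6p1 (X : comPzSemiRingType) (hX : upper_bound X) :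
  (fully_elementary (SX X) <-> Frobenius (SX X)) /\
  (Frobenius (SX X) <-> (forall x : X, x = 0)).
Proof.
have FE : (forall x : X, x = 0) -> fully_elementary (SX X).
  move=> h n D c _; exists 0%N, (fun _ => 0) => x; exact: triv_all.
have Fr : (forall x : X, x = 0) -> Frobenius (SX X).
  move=> h x y n _; exact: triv_all.
split; split.
- by move=> /(@FE_triv X hX) /Fr.
- by move=> /(@Frob_triv X hX) /FE.
- exact: (@Frob_triv X hX).
- exact: Fr.
Qed.
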